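(* For positive integers $n$, \[ A'(n,4,4) = \begin{cases} 1,&\text{if } n\leq 3, \\ 2,&\text{if } n\in\{4,5\}, \\ 4,&\text{if } n=6, \\ 8,&\text{if } n=7, \\ 19,&\text{if } n=9. \end{cases} \]
   Context: $A'(n,4,4)$ denotes the maximum size of a nonempty set $S\subseteq \mathbb{F}_2^n$ such that every element of $S$ has Hamming weight at most $4$ and any two distinct elements of $S$ are at Hamming distance at least $4$. *)

(* Defs.v *)
From mathcomp Require Import all_boot.
Set Implicit Arguments. Unset Strict Implicit. Unset Printing Implicit Defensive.

Definition vec (n : nat) := {ffun 'I_n -> bool}.

Definition hweight n (x : vec n) : nat := #|[set i | x i]|.

Definition hdist n (x y : vec n) : nat := #|[set i | x i != y i]|.

Definition cw_code n d w (S : {set vec n}) : bool :=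
  [&& S != set0,
      [forall x in S, hweight x <= w] &
      [forall x in S, forall y in S, (x != y) ==> (d <= hdist x y)]].

Definition Aprime n d w : nat := \max_(S : {set vec n} | cw_code d w S) #|S|.

(* Main.v *)
Require Import Defs.
From mathcomp Require Import all_boot.
Set Implicit Arguments. Unset Strict Implicit. Unset Printing Implicit Defensive.

Fixpoint diffc (a b : seq bool) : nat :=
  match a, b with x::a', y::b' => (x != y) + diffc a' b' | _, _ => 0 end.
Definition fc (a b : seq bool) := 4 <= diffc a b.
Fixpoint bls n : seq (seq bool) :=
  match n with 0 => [:: [::]] | n'.+1 => [seq b :: s | b <- [:: true; false], s <- bls n'] end.
Fixpoint sumw (w : seq bool -> nat) l :=
  match l with nil => 0 | x::l' => w x + sumw w l' end.
Fixpoint chk (w : seq bool -> nat) fuel B (l : seq (seq bool)) : bool :=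
  match fuel with 0 => false | fuel'.+1 =>
  match l with nil => true | v :: l' =>
   (sumw w l <= B) || [&& w v <= B, chk w fuel' (B - w v) (filter (fc v) l') & chk w fuel' B l'] end end.

Lemma sumwE w l : sumw w l = \sum_(a <- l) w a.
Proof. by elim: l => [|x l IH] /=; rewrite ?big_nil ?big_cons ?IH. Qed.

Lemma sum_sub (w : seq bool -> nat) l : forall S, uniq S -> {subset S <= l} ->
  \sum_(a <- S) w a <= \sum_(a <- l) w a.
Proof.
elim: l => [|v l IH] S uS sS.
  by case: S uS sS => [|x S] //= _ /(_ x); rewrite inE eqxx => /(_ isT).
rewrite big_cons; case vS: (v \in S).
  rewrite (perm_big _ (perm_to_rem vS)) big_cons leq_add2l.
  apply: IH; first by rewrite rem_uniq.
  move=> y; rewrite (mem_rem_uniq _ uS) inE => /andP [yv yS].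
  by move: (sS y yS); rewrite inE (negbTE yv).
apply: leq_trans (leq_addl _ _); apply: IH => // y yS.
by move: (sS y yS); rewrite inE; case: eqP => [yv|//]; rewrite yv vS in yS.
Qed.

Lemma chk_sound w : forall fuel B l S, size l <= fuel -> chk w fuel B l -> uniq S ->
  {subset S <= l} -> (forall x y, x \in S -> y \in S -> x != y -> fc x y) ->
  \sum_(a <- S) w a <= B.
Proof.
elim=> [|fuel IH] B [|v l] S //= szl.
  move=> _ _ sS _; case: S sS => [|x S]; first by rewrite big_nil.
  by move/(_ x); rewrite inE eqxx => /(_ isT).
case/orP => [hs | /and3P [wv c1 c2]] uS sS pS.
  apply: leq_trans hs; have := sum_sub w uS sS; by rewrite big_cons sumwE.
case vS: (v \in S).
  rewrite (perm_big _ (perm_to_rem vS)) big_cons.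
  rewrite -(subnKC wv) leq_add2l.
  apply: (IH _ (filter (fc v) l)) => //.
  - by rewrite size_filter (leq_trans (count_size _ _)).
  - by rewrite rem_uniq.
  - move=> y; rewrite (mem_rem_uniq _ uS) inE => /andP [yv yS].
    rewrite mem_filter; move: (sS y yS); rewrite inE (negbTE yv) /= => ->.
    by rewrite pS // eq_sym.
  - move=> x y; rewrite !(mem_rem_uniq _ uS) !inE => /andP [_ xS] /andP [_ yS].
    exact: pS.
apply: (IH _ l) => // y yS.
by move: (sS y yS); rewrite inE; case: eqP => [yv|//]; rewrite yv vS in yS.
Qed.

Definition g n (x : vec n) : seq bool := fgraph x.

Lemma g_map n (x : vec n) : g x = [seq x i | i <- enum 'I_n].
Proof. by rewrite /g fgraph_codom /= codomE. Qed.

Lemma g_inj n : injective (@g n).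
Proof. move=> x y /val_inj h; by rewrite -(fgraphK x) -(fgraphK y) h. Qed.

Lemma size_g n (x : vec n) : size (g x) = n.
Proof. by rewrite g_map size_map size_enum_ord. Qed.

Lemma hweightE n (x : vec n) : hweight x = count id (g x).
Proof. rewrite /hweight cardsE cardE size_filter g_map count_map enumT. by apply: eq_count. Qed.

Lemma diffc_map (T : Type) (f h : T -> bool) e :
  diffc (map f e) (map h e) = count (fun i => f i != h i) e.
Proof. by elim: e => //= a e ->. Qed.

Lemma hdistE n (x y : vec n) : hdist x y = diffc (g x) (g y).
Proof. rewrite /hdist cardsE cardE size_filter !g_map diffc_map enumT. by apply: eq_count. Qed.

Lemma mem_bls n s : size s = n -> s \in bls n.
Proof.
elim: n s => [|n IH] [|b s] //= [hs].
have inj (c : bool) : injective (cons c) by move=> ? ? [].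
by case: b; rewrite !mem_cat (mem_map (inj _)) IH // orbT.
Qed.

Lemma code_props n (S : {set vec n}) : cw_code 4 4 S ->
  (forall x, x \in S -> hweight x <= 4) /\
  (forall x y, x \in S -> y \in S -> x != y -> 4 <= hdist x y).
Proof.
case/and3P => _ /forallP hw /forallP hd; split.
  by move=> x xS; move: (hw x); rewrite xS.
move=> x y xS yS xy; move: (hd x); rewrite xS /= => /forallP /(_ y).
by rewrite yS xy.
Qed.

Definition Wn n := [seq s <- bls n | count id s <= 4].

Lemma ub_small n B : chk (fun _ => 1) (size (Wn n)) B (Wn n) ->
  forall S : {set vec n}, cw_code 4 4 S -> #|S| <= B.
Proof.
move=> hc S /code_props [hw hd].
have := @chk_sound (fun _ => 1) _ B _ (map (@g n) (enum S)) (leqnn _) hc.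
rewrite big_map sum1_size -cardE; apply.
- by rewrite (map_inj_uniq (@g_inj n)) enum_uniq.
- move=> a /mapP [x]; rewrite mem_enum => xS ->.
  by rewrite mem_filter -hweightE hw // mem_bls // size_g.
- move=> a b /mapP [x]; rewrite mem_enum => xS -> /mapP [y]; rewrite mem_enum => yS ->.
  move=> gxy; rewrite /fc -hdistE hd //; apply: contraNneq gxy => ->; exact: eqxx.
Qed.

Definition mk n (a : seq bool) : vec n := [ffun k : 'I_n => nth false a k].

Lemma g_mk n a : size a = n -> g (mk n a) = a.
Proof.
move=> sa; rewrite g_map.
have -> : [seq mk n a i | i <- enum 'I_n] = [seq nth false a i | i <- [seq val i | i <- enum 'I_n]].
  by rewrite -map_comp; apply: eq_map => i; rewrite ffunE.
by rewrite val_enum_ord -sa -/(mkseq _ _) mkseq_nth.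
Qed.

Lemma lb n (L : seq (seq bool)) :
  all (fun a => size a == n) L -> uniq L -> L != [::] -> all (fun a => count id a <= 4) L ->
  all (fun a => all (fun b => (a == b) || fc a b) L) L -> size L <= Aprime n 4 4.
Proof.
move=> /allP hs uL nL /allP hc /allP hf.
have gm a : a \in L -> g (mk n a) = a by move=> aL; apply: g_mk; apply/eqP; apply: hs.
have ui : uniq (map (mk n) L).
  rewrite (map_inj_in_uniq _) // => a b aL bL e.
  by rewrite -(gm a aL) -(gm b bL) e.
pose S := [set x in map (mk n) L].
have cS : #|S| = size L by rewrite cardsE (card_uniqP ui) size_map.
rewrite -cS /Aprime; apply: (@leq_bigmax_cond _ (fun S : {set vec n} => cw_code 4 4 S) (fun S : {set vec n} => #|S|) S).
apply/and3P; split.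
- case: L nL @S {hs uL hc hf gm ui cS} => [|a L] // _ /=.
  by apply/set0Pn; exists (mk n a); rewrite inE /= inE eqxx.
- apply/forallP => x; apply/implyP; rewrite inE => /mapP [a aL ->].
  by rewrite hweightE gm // hc.
- apply/forallP => x; apply/implyP; rewrite inE => /mapP [a aL ->].
  apply/forallP => y; apply/implyP; rewrite inE => /mapP [b bL ->].
  apply/implyP => neq; rewrite hdistE !gm //.
  move: (allP (hf a aL) b bL); case: eqP => [eab|] //= _.
  by rewrite eab eqxx in neq.
Qed.

Lemma count_rot i (s : seq bool) : count id (rot i s) = count id s.
Proof. by rewrite /rot count_cat addnC -count_cat cat_take_drop. Qed.

Lemma diffc_cat a1 a2 b1 b2 : size a1 = size b1 ->
  diffc (a1 ++ a2) (b1 ++ b2) = diffc a1 b1 + diffc a2 b2.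
Proof.
elim: a1 b1 => [|x a1 IH] [|y b1] //= [h].
by rewrite IH // addnA.
Qed.

Lemma diffc_rot i a b : size a = size b -> diffc (rot i a) (rot i b) = diffc a b.
Proof.
move=> h; rewrite /rot diffc_cat ?size_drop ?h // addnC -diffc_cat ?size_take ?h //.
by rewrite !cat_take_drop.
Qed.

Lemma head_rot i (s : seq bool) : i < size s -> head false (rot i s) = nth false s i.
Proof.
move=> h; rewrite /rot -nth0 nth_cat size_drop subn_gt0 h nth_drop addn0 //.
Qed.

Lemma nth_g n (x : vec n) (i : 'I_n) : nth false (g x) i = x i.
Proof. exact: nth_fgraph_ord. Qed.

Lemma diffc_le a b : diffc a b <= count id a + count id b.
Proof.
elim: a b => [|x a IH] [|y b] //=.
rewrite -addnA (addnCA (count id a)) addnA; apply: leq_add => //.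
by case: x; case: y.
Qed.

Definition cc k := match k with 1 => 12 | 2 => 6 | 3 => 4 | 4 => 3 | _ => 0 end.
Definition cw (a : seq bool) := cc (count id a).

Definition W0 := [seq s <- bls 9 | head false s && (count id s <= 4)].
Definition W0' := [seq s <- W0 | count id s != 2].
Definition W2h := [seq s <- W0 | count id s == 2].
Definition W2n := [seq s <- bls 9 | ~~ head false s && (count id s == 2)].

Lemma C1 : chk cw (size W0') 24 W0'.
Proof. by vm_compute. Qed.

Lemma C2 : all (fun a => chk cw (size (a :: filter (fc a) W0)) 27 (a :: filter (fc a) W0)) W2h.
Proof. by vm_compute. Qed.

Lemma C3 : all (fun a => all (fun b => fc a b ==>
   chk cw (size (a :: filter (fc a) (filter (fc b) W0))) 24 (a :: filter (fc a) (filter (fc b) W0))) W2n) W2h.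
Proof. by vm_compute. Qed.

Lemma mem_W0 a : size a = 9 -> (a \in W0) = head false a && (count id a <= 4).
Proof. by move=> h; rewrite /W0 mem_filter (mem_bls h) andbT. Qed.
Lemma mem_W0' a : (a \in W0') = (count id a != 2) && (a \in W0).
Proof. exact: (mem_filter (fun s => count id s != 2)). Qed.
Lemma mem_W2h a : (a \in W2h) = (count id a == 2) && (a \in W0).
Proof. exact: (mem_filter (fun s => count id s == 2)). Qed.
Lemma mem_W2n a : size a = 9 -> (a \in W2n) = ~~ head false a && (count id a == 2).
Proof. by move=> h; rewrite /W2n mem_filter (mem_bls h) andbT. Qed.
Global Opaque W0 W0' W2h W2n.

Definition X9 (S : {set vec 9}) : {set 'I_9} :=
  [set i | [exists u in S, hweight u == 2] && [forall u in S, (hweight u == 2) ==> u i]].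

Section Local.
Variable S : {set vec 9}.
Hypothesis hS : cw_code 4 4 S.
Variable i : 'I_9.

Let r (x : vec 9) := rot i (g x).

Lemma r_inj : injective r.
Proof. by move=> x y /rot_inj /g_inj. Qed.

Lemma r_count x : count id (r x) = hweight x.
Proof. by rewrite /r count_rot hweightE. Qed.

Lemma r_head x : head false (r x) = x i.
Proof. by rewrite /r head_rot ?size_g // nth_g. Qed.

Lemma r_size x : size (r x) = 9.
Proof. by rewrite /r size_rot size_g. Qed.

Lemma r_fc x y : x \in S -> y \in S -> x != y -> fc (r x) (r y).
Proof.
case/code_props: hS => _ hd xS yS xy.
by rewrite /fc /r diffc_rot ?size_g // -hdistE hd.
Qed.

Let F := [seq r x | x <- [seq x <- enum S | (x : vec 9) i]].

Lemma F_uniq : uniq F.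
Proof. by rewrite (map_inj_uniq r_inj) filter_uniq // enum_uniq. Qed.

Lemma F_mem a : a \in F -> exists2 x, x \in S & x i /\ a = r x.
Proof. by case/mapP => x; rewrite mem_filter mem_enum => /andP [xi xS] ->; exists x. Qed.

Lemma F_W0 a : a \in F -> a \in W0.
Proof.
case/F_mem => x xS [xi ->]; case/code_props: hS => hw _.
by rewrite mem_W0 ?r_size // r_head xi r_count hw.
Qed.

Lemma F_pw a b : a \in F -> b \in F -> a != b -> fc a b.
Proof.
case/F_mem => x xS [_ ->]; case/F_mem => y yS [_ ->] ne.
apply: r_fc => //; apply: contraNneq ne => ->; exact: eqxx.
Qed.

Lemma F_sum : \sum_(a <- F) cw a = \sum_(x in S | x i) cc (hweight x).
Proof.
rewrite big_map big_filter -big_enum_cond; apply: eq_bigr => x _.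
by rewrite /cw r_count.
Qed.

Lemma local9 : \sum_(x in S | x i) cc (hweight x) <= 24 + 3 * (i \in X9 S).
Proof.
rewrite -F_sum.
have sound l B : chk cw (size l) B l -> {subset F <= l} -> \sum_(a <- F) cw a <= B.
  move=> hc sF; apply: (chk_sound (leqnn _) hc F_uniq sF) => x y xF yF; exact: F_pw.
case: (boolP (has (fun a => count id a == 2) F)) => [/hasP [a aF a2] | no2]; last first.
  apply: leq_trans (leq_addr _ _); apply: (sound _ _ C1) => a aF.
  rewrite mem_W0' F_W0 // andbT; apply: contra no2 => a2; by apply/hasP; exists a.
have aW : a \in W2h by rewrite mem_W2h a2 F_W0.
case/F_mem: (aF) => x0 x0S [x0i ea].
case: (boolP [exists u in S, (hweight u == 2) && ~~ u i]).
  case/existsP => u /andP [uS /andP [u2 ui]].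
  apply: leq_trans (leq_addr _ _).
  have bW : r u \in W2n by rewrite mem_W2n ?r_size // r_head (negbTE ui) r_count u2.
  have fab : fc a (r u).
    rewrite ea r_fc //; apply: contraNneq ui => <-; exact: x0i.
  move: (allP C3 a aW) => /allP /(_ _ bW); rewrite fab => /implyP /(_ isT) hc.
  apply: (sound _ _ hc) => y yF; rewrite inE; case: eqP => //= ya.
  case/F_mem: (yF) => y0 y0S [y0i ey].
  rewrite mem_filter F_pw //; last by apply/eqP => e; apply: ya.
  rewrite mem_filter F_W0 // andbT ey r_fc //.
  by apply: contraNneq ui => ->.
move=> nex.
have iX : i \in X9 S.
  rewrite inE; apply/andP; split.
    apply/existsP; exists x0; rewrite x0S /= -r_count -ea a2 //.
  apply/forallP => u; apply/implyP => uS; apply/implyP => u2.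
  apply: contraR nex => ui; apply/existsP; exists u; by rewrite uS u2.
rewrite iX; move: (allP C2 a aW) => hc.
apply: (sound _ _ hc) => y yF; rewrite inE; case: eqP => //= ya.
rewrite mem_filter F_pw //; last by apply/eqP => e; apply: ya.
by rewrite F_W0.
Qed.

End Local.
Definition code4 : seq (seq bool) :=
  [:: [:: false; false; false; false];
     [:: true; true; true; true]].
Definition code5 : seq (seq bool) :=
  [:: [:: false; false; false; false; false];
     [:: true; true; true; true; false]].
Definition code6 : seq (seq bool) :=
  [:: [:: false; false; false; false; false; false];
     [:: true; true; true; true; false; false];
     [:: true; true; false; false; true; true];
     [:: false; false; true; true; true; true]].
Definition code7 : seq (seq bool) :=
  [:: [:: false; false; false; false; false; false; false];
     [:: true; true; true; true; false; false; false];
     [:: true; true; false; false; true; true; false];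
     [:: true; false; true; false; true; false; true];
     [:: true; false; false; true; false; true; true];
     [:: false; true; true; false; false; true; true];
     [:: false; true; false; true; true; false; true];
     [:: false; false; true; true; true; true; false]].
Definition code9 : seq (seq bool) :=
  [:: [:: false; false; false; false; false; false; false; false; false];
     [:: true; true; true; true; false; false; false; false; false];
     [:: true; true; false; false; true; true; false; false; false];
     [:: true; true; false; false; false; false; true; true; false];
     [:: true; false; true; false; true; false; true; false; false];
     [:: true; false; true; false; false; true; false; false; true];
     [:: true; false; false; true; false; true; false; true; false];
     [:: true; false; false; true; false; false; true; false; true];
     [:: true; false; false; false; true; false; false; true; true];
     [:: false; true; true; false; true; false; false; true; false];
     [:: false; true; true; false; false; false; true; false; true];
     [:: false; true; false; true; true; false; false; false; true];
     [:: false; true; false; true; false; true; true; false; false];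
     [:: false; true; false; false; false; true; false; true; true];
     [:: false; false; true; true; true; true; false; false; false];
     [:: false; false; true; true; false; false; false; true; true];
     [:: false; false; true; false; false; true; true; true; false];
     [:: false; false; false; true; true; false; true; true; false];
     [:: false; false; false; false; true; true; true; false; true]].
Definition code1 : seq (seq bool) := [:: [:: false]].
Definition code2 : seq (seq bool) := [:: [:: false; false]].
Definition code3 : seq (seq bool) := [:: [:: false; false; false]].

Lemma ub9 (S : {set vec 9}) : cw_code 4 4 S -> #|S| <= 19.
Proof.
move=> hS; have [hw hd] := code_props hS.
have key : \sum_(i : 'I_9) \sum_(x in S | x i) cc (hweight x) =
           \sum_(x in S) 12 * (0 < hweight x).
  have e (i : 'I_9) : \sum_(x in S | x i) cc (hweight x) =
      \sum_(x in S) (if x i then cc (hweight x) else 0) by rewrite big_mkcondr.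
  rewrite (eq_bigr _ (fun i _ => e i)).
  rewrite exchange_big; apply: eq_bigr => x xS.
  rewrite -big_mkcond /= -(mul1n (cc _)) -big_distrl /=.
  have -> : \sum_(i | x i) 1 = hweight x.
    by rewrite /hweight -sum1_card; apply: eq_bigl => i; rewrite inE.
  by case: (hweight x) (hw x xS) => [|[|[|[|[|k]]]]].
have L : \sum_(i : 'I_9) \sum_(x in S | x i) cc (hweight x) <=
         \sum_(i : 'I_9) (24 + 3 * (i \in X9 S)).
  by apply: leq_sum => i _; exact: local9.
have cX : #|X9 S| <= 2.
  case: (set_0Vmem (X9 S)) => [-> | [i]]; first by rewrite cards0.
  rewrite inE => /andP [/existsP [u /andP [uS u2]] _].
  apply: (@leq_trans #|[set j | u j]|); last by have := eqP u2; rewrite /hweight => ->.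
  apply: subset_leq_card; apply/subsetP => j.
  rewrite !inE => /andP [_ /forallP /(_ u)]; by rewrite uS u2.
have sX : \sum_(i : 'I_9) (24 + 3 * (i \in X9 S)) = 216 + 3 * #|X9 S|.
  rewrite big_split /= sum_nat_const card_ord -big_distrr /=; congr (_ + 3 * _).
  rewrite -sum1_card [RHS]big_mkcond /=; apply: eq_bigr => i _; by case: (i \in X9 S).
have s18 : \sum_(x in S) (0 < hweight x) <= 18.
  have : 12 * \sum_(x in S) (0 < hweight x) <= 222.
    rewrite big_distrr /= -key; apply: (leq_trans L); rewrite sX.
    by rewrite -(leq_add2l 216) in cX; rewrite (leq_trans _ (_ : 216 + 3 * 2 <= 222)) // leq_add2l leq_mul2l.
  move=> h; rewrite leqNgt; apply/negP => h'.
  have := leq_mul (leqnn 12) h'; rewrite mulnS => h2.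
  by have := leq_trans h2 h.
have s1 : \sum_(x in S) (hweight x == 0) <= 1.
  have -> : \sum_(x in S) (hweight x == 0) = #|[set x in S | hweight x == 0]|.
    rewrite (eq_bigr (fun x => if hweight x == 0 then 1 else 0)); last first.
      by move=> x _; case: (hweight x == 0).
    rewrite -big_mkcondr -[RHS]sum1_card; apply: eq_bigl => x; by rewrite !inE.
  apply/card_le1_eqP => x y; rewrite !inE => /andP [xS x0] /andP [yS y0].
  apply/eqP; apply: contraT => xy; have := hd y x yS xS xy.
  rewrite hdistE => h; have := leq_trans h (diffc_le _ _).
  by rewrite -!hweightE (eqP x0) (eqP y0).
apply: (@leq_trans (\sum_(x in S) 1)); first by rewrite sum1_card.
have -> : \sum_(x in S) 1 = \sum_(x in S) ((0 < hweight x) + (hweight x == 0)).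
  by apply: eq_bigr => x _; case: (hweight x).
by rewrite big_split /=; apply: (leq_trans (leq_add s18 s1)).
Qed.

Lemma Aval n B (L : seq (seq bool)) :
  chk (fun _ => 1) (size (Wn n)) B (Wn n) ->
  all (fun a => size a == n) L -> uniq L -> L != [::] -> all (fun a => count id a <= 4) L ->
  all (fun a => all (fun b => (a == b) || fc a b) L) L -> size L = B -> Aprime n 4 4 = B.
Proof.
move=> hc h1 h2 h3 h4 h5 hs; apply/eqP; rewrite eqn_leq; apply/andP; split.
  by apply/bigmax_leqP => S hS; exact: ub_small hc S hS.
by rewrite -hs; exact: lb.
Qed.

Lemma A1 : Aprime 1 4 4 = 1. Proof. by apply: (Aval (L := code1)); vm_compute. Qed.
Lemma A2 : Aprime 2 4 4 = 1. Proof. by apply: (Aval (L := code2)); vm_compute. Qed.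
Lemma A3 : Aprime 3 4 4 = 1. Proof. by apply: (Aval (L := code3)); vm_compute. Qed.
Lemma A4 : Aprime 4 4 4 = 2. Proof. by apply: (Aval (L := code4)); vm_compute. Qed.
Lemma A5 : Aprime 5 4 4 = 2. Proof. by apply: (Aval (L := code5)); vm_compute. Qed.
Lemma A6 : Aprime 6 4 4 = 4. Proof. by apply: (Aval (L := code6)); vm_compute. Qed.
Lemma A7 : Aprime 7 4 4 = 8. Proof. by apply: (Aval (L := code7)); vm_compute. Qed.

Lemma A9 : Aprime 9 4 4 = 19.
Proof.
apply/eqP; rewrite eqn_leq; apply/andP; split.
  by apply/bigmax_leqP => S hS; exact: ub9.
have -> : 19 = size code9 by [].
by apply: lb; vm_compute.
Qed.

Unset Implicit Arguments.

Theorem proposition8 (n : nat) (hn : 0 < n) :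
  [/\ (n <= 3 -> Aprime n 4 4 = 1),
      (n = 4 \/ n = 5 -> Aprime n 4 4 = 2),
      (n = 6 -> Aprime n 4 4 = 4),
      (n = 7 -> Aprime n 4 4 = 8) &
      (n = 9 -> Aprime n 4 4 = 19)].
Proof.
split => [h | [->|->] | -> | -> | ->]; try by [exact: A4 | exact: A5 | exact: A6 | exact: A7 | exact: A9].
by case: n hn h => [|[|[|[|n]]]] // _ _; [exact: A1 | exact: A2 | exact: A3].
Qed.
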